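(* Let $n\ge 2$ and let $b\in B_n$ be a half-twist with $\pi(b)=(1,n)$. Then $b^2\in A_n$, and there exists $P\in A_n$ such that $b^2=P^{-1}a_{n-1}P$.
   Context: $B_n$ is Artin's braid group with generators $\sigma_1,\dots,\sigma_{n-1}$; $\pi:B_n\to S_n$ is the homomorphism with $\pi(\sigma_i)=(i,i+1)$. A half-twist is an element of the conjugacy class of $\sigma_1$ in $B_n$. For $1\le i\le n-1$ let $a_i=\sigma_1\cdots\sigma_{i-1}\sigma_i^2\sigma_{i-1}^{-1}\cdots\sigma_1^{-1}$, and let $A_n$ be the subgroup of $B_n$ generated by $a_1,\dots,a_{n-1}$ (the ''combed braids'': braids representable with strings $2,\dots,n$ straight and parallel and only string 1 moving among them); $A_n$ is a free group on $a_1,\dots,a_{n-1}$. *)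

(* Defs.v *)
(* Artin braid group B_n given by its standard
   presentation: elements are words in sigma_i^{+-1} (1 <= i <= n-1) modulo the
   congruence generated by free cancellation and the braid relations. *)
From mathcomp Require Import all_boot.
Set Implicit Arguments. Unset Strict Implicit. Unset Printing Implicit Defensive.

(* a letter (i, true) = sigma_i, (i, false) = sigma_i^{-1} *)
Definition letter := (nat * bool)%type.
Definition word := seq letter.

Definition well_formed (n : nat) (w : word) : Prop :=
  all (fun l : letter => (1 <= l.1) && (l.1 <= n.-1)) w.

Definition winv (w : word) : word := rev (map (fun l : letter => (l.1, ~~ l.2)) w).

Inductive braid_rel (n : nat) : word -> word -> Prop :=
| rel_cancel : forall i (s : bool), 1 <= i -> i <= n.-1 ->
    braid_rel n [:: (i, s); (i, ~~ s)] [::]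
| rel_braid : forall i, 1 <= i -> i.+1 <= n.-1 ->
    braid_rel n [:: (i, true); (i.+1, true); (i, true)]
                [:: (i.+1, true); (i, true); (i.+1, true)]
| rel_comm : forall i j, 1 <= i -> i <= n.-1 -> 1 <= j -> j <= n.-1 -> i.+1 < j ->
    braid_rel n [:: (i, true); (j, true)] [:: (j, true); (i, true)].

Inductive braid_eq (n : nat) : word -> word -> Prop :=
| beq_refl : forall w, braid_eq n w w
| beq_sym : forall u v, braid_eq n u v -> braid_eq n v u
| beq_trans : forall u v w, braid_eq n u v -> braid_eq n v w -> braid_eq n u w
| beq_rel : forall u v x y, braid_rel n x y -> braid_eq n (u ++ x ++ v) (u ++ y ++ v).

Definition is_half_twist (n : nat) (b : word) : Prop :=
  exists g : word, well_formed n g /\ braid_eq n b (winv g ++ [:: (1, true)] ++ g).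

Definition transp (a c : nat) (k : nat) : nat :=
  if k == a then c else if k == c then a else k.

Definition perm_of_word (w : word) : nat -> nat :=
  foldr (fun (l : letter) f => transp l.1 l.1.+1 \o f) id w.

Definition a_word (i : nat) : word :=
  let pre := [seq (k, true) | k <- iota 1 i.-1] in
  pre ++ [:: (i, true); (i, true)] ++ winv pre.

(* words in the a_i^{+-1}, expanded into sigma-words *)
Definition a_letter (l : letter) : word :=
  if l.2 then a_word l.1 else winv (a_word l.1).
Definition expandA (s : word) : word := flatten (map a_letter s).

Definition in_A (n : nat) (w : word) : Prop :=
  exists s : word, well_formed n s /\ braid_eq n w (expandA s).

(* Main.v *)
Require Import Defs.
From mathcomp Require Import all_boot zify.
From Stdlib Require Import Setoid Morphisms.
Set Implicit Arguments. Unset Strict Implicit. Unset Printing Implicit Defensive.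

#[export] Instance beq_equiv n : Equivalence (braid_eq n).
Proof. split; [exact: beq_refl| exact: beq_sym | exact: beq_trans]. Qed.

Lemma beq_catl n u v w : braid_eq n u v -> braid_eq n (u ++ w) (v ++ w).
Proof.
elim=> //; first by move=> *; reflexivity.
- by move=> ????; symmetry.
- by move=> ??? _ H1 _ H2; rewrite H1.
by move=> u0 v0 x y H; rewrite -!catA; apply: beq_rel.
Qed.

Lemma beq_catr n u v w : braid_eq n u v -> braid_eq n (w ++ u) (w ++ v).
Proof.
elim=> //; first by move=> *; reflexivity.
- by move=> ????; symmetry.
- by move=> ??? _ H1 _ H2; rewrite H1.
by move=> u0 v0 x y H; rewrite !catA; rewrite -!(catA (w ++ u0)); apply: beq_rel.
Qed.

#[export] Instance cat_proper n : Proper (braid_eq n ==> braid_eq n ==> braid_eq n) (@cat letter).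
Proof. move=> u v H x y H'. rewrite (beq_catl _ H). exact: beq_catr. Qed.

#[export] Instance cons_proper n : Proper (eq ==> braid_eq n ==> braid_eq n) (@cons letter).
Proof. move=> a b -> x y H. exact: (beq_catr [:: b] H). Qed.

Lemma test n a b c : braid_eq n b c -> braid_eq n (a :: b ++ [::]) (a :: c ++ [::]).
Proof. move=> H. rewrite H. reflexivity. Qed.

Definition wfl n (l : letter) := (1 <= l.1) && (l.1 <= n.-1).

Lemma winv_cat u v : winv (u ++ v) = winv v ++ winv u.
Proof. by rewrite /winv map_cat rev_cat. Qed.
Lemma winvK u : winv (winv u) = u.
Proof. by rewrite /winv map_rev -map_comp revK; elim: u => //= [[i s] u ->]; rewrite negbK. Qed.
Lemma winv_cons x u : winv (x :: u) = winv u ++ [:: (x.1, ~~ x.2)].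
Proof. by rewrite -cat1s winv_cat. Qed.
Lemma winv1 x : winv [:: x] = [:: (x.1, ~~ x.2)].
Proof. by []. Qed.

Definition wfw n (w : word) : bool := all (wfl n) w.
Lemma wfwE n w : well_formed n w <-> wfw n w.
Proof. by []. Qed.
Lemma wf_cat n u v : wfw n (u ++ v) = wfw n u && wfw n v.
Proof. exact: all_cat. Qed.
Lemma wf_winv n u : wfw n (winv u) = wfw n u.
Proof. by rewrite /wfw /winv all_rev all_map. Qed.
Lemma wf_cons n x u : wfw n (x :: u) = wfl n x && wfw n u.
Proof. by []. Qed.

Lemma rcancel n i s v : 1 <= i <= n.-1 -> braid_eq n ((i, s) :: (i, ~~ s) :: v) v.
Proof. case/andP=> h1 h2. exact: (@beq_rel n [::] v _ [::] (rel_cancel s h1 h2)). Qed.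

Lemma wcancel n w v : wfw n w -> braid_eq n (w ++ winv w ++ v) v.
Proof.
elim: w v => [|[i s] w IH] v //=; first reflexivity.
case/andP=> /= hx hw. rewrite winv_cons -catA IH //. exact: rcancel.
Qed.

Lemma wcancel' n w v : wfw n w -> braid_eq n (winv w ++ w ++ v) v.
Proof. move=> h. have := @wcancel n (winv w) v. rewrite winvK wf_winv. by apply. Qed.

Lemma wcancel0 n w : wfw n w -> braid_eq n (w ++ winv w) [::].
Proof. move=> h; have := wcancel [::] h; by rewrite cats0. Qed.
Lemma wcancel0' n w : wfw n w -> braid_eq n (winv w ++ w) [::].
Proof. move=> h; have := wcancel' [::] h; by rewrite cats0. Qed.

Definition conj n y u v := braid_eq n (u ++ y) (y ++ v).

Lemma conj_nil n y : conj n y [::] [::].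
Proof. rewrite /conj cats0; reflexivity. Qed.

Lemma conj_cat n y u v u' v' : conj n y u v -> conj n y u' v' -> conj n y (u ++ u') (v ++ v').
Proof. rewrite /conj => h1 h2. rewrite -catA h2 catA h1 -catA; reflexivity. Qed.

Lemma conj_eq n y u v u' v' : braid_eq n u u' -> braid_eq n v v' -> conj n y u v -> conj n y u' v'.
Proof. rewrite /conj => -> ->. done. Qed.

Lemma conj_inv n y u v : wfw n u -> wfw n v -> conj n y u v -> conj n y (winv u) (winv v).
Proof.
rewrite /conj => hu hv h.
transitivity (winv u ++ (y ++ v) ++ winv v).
  by rewrite -catA wcancel0 // cats0; reflexivity.
by rewrite -h -catA catA wcancel0' //; reflexivity.
Qed.

Lemma conj_swap n y u v : wfw n y -> conj n y u v -> conj n (winv y) v u.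
Proof.
rewrite /conj => hy h; symmetry.
transitivity (winv y ++ (u ++ y) ++ winv y).
  by rewrite -catA wcancel0 // cats0; reflexivity.
rewrite h !catA wcancel0' //=; reflexivity.
Qed.

Lemma conj_comp n y1 y2 u v w : conj n y1 u v -> conj n y2 v w -> conj n (y1 ++ y2) u w.
Proof. rewrite /conj => h1 h2. rewrite catA h1 -catA h2 catA; reflexivity. Qed.

Lemma conj_unconj n y X X' : wfw n y -> conj n y X X' -> braid_eq n (winv y ++ X ++ y) X'.
Proof. rewrite /conj => hy ->. rewrite catA wcancel0' //; reflexivity. Qed.

Lemma rbraid n i v : 1 <= i -> i.+1 <= n.-1 ->
  braid_eq n [:: (i, true), (i.+1, true), (i, true) & v] [:: (i.+1, true), (i, true), (i.+1, true) & v].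
Proof. move=> h1 h2. exact: (@beq_rel n [::] v _ _ (rel_braid h1 h2)). Qed.

Lemma comm_letter n i j s1 s2 : 1 <= i <= n.-1 -> 1 <= j <= n.-1 -> (i.+1 < j) || (j.+1 < i) ->
  conj n [:: (j, s2)] [:: (i, s1)] [:: (i, s1)].
Proof.
move=> /andP[hi1 hi2] /andP[hj1 hj2] hij.
have base : conj n [:: (j, true)] [:: (i, true)] [:: (i, true)].
  rewrite /conj; case/orP: hij => h.
    exact: (@beq_rel n [::] [::] _ _ (rel_comm hi1 hi2 hj1 hj2 h)).
  symmetry; exact: (@beq_rel n [::] [::] _ _ (rel_comm hj1 hj2 hi1 hi2 h)).
have base' : conj n [:: (j, true)] [:: (i, s1)] [:: (i, s1)].
  case: s1; first exact: base.
  by apply: (conj_inv _ _ base); rewrite /wfw /= /wfl /= hi1 hi2.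
case: s2; first exact: base'.
by apply: (conj_swap _ base'); rewrite /wfw /= /wfl /= hj1 hj2.
Qed.

Lemma comm_word n j s w : 1 <= j <= n.-1 ->
  all (fun l : letter => (1 <= l.1 <= n.-1) && ((l.1.+1 < j) || (j.+1 < l.1))) w ->
  conj n [:: (j, s)] w w.
Proof.
move=> hj; elim: w => [|[i s1] w IH] /=; first by move=> _; exact: conj_nil.
case/andP=> /andP[hi hij] hw.
exact: (conj_cat (comm_letter s1 s hi hj hij) (IH hw)).
Qed.

Definition tw (k : nat) : word := [seq (i, true) | i <- iota 1 k.-1].

Lemma tw1 : tw 1 = [::]. Proof. by []. Qed.
Lemma twS k : 1 <= k -> tw k.+1 = tw k ++ [:: (k, true)].
Proof.
move=> hk. rewrite /tw /=.
have e : k = k.-1 + 1 by lia.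
rewrite [in iota 1 k]e iotaD map_cat /=. do 3 f_equal. lia.
Qed.

Lemma a_wordE i : a_word i = tw i ++ [:: (i, true); (i, true)] ++ winv (tw i).
Proof. by []. Qed.

Lemma wf_tw n k : k <= n -> wfw n (tw k).
Proof.
move=> hk. rewrite /wfw /tw all_map. apply/allP => i /=. rewrite mem_iota /wfl /= => /andP[h1 h2]. 
apply/andP; split => //; lia.
Qed.

Lemma T0 n j s k : k < j -> j <= n.-1 -> conj n [:: (j, s)] (tw k) (tw k).
Proof.
move=> hkj hj. apply: comm_word; first by apply/andP; split=> //; lia.
rewrite /tw all_map. apply/allP => i /=. rewrite mem_iota => /andP[h1 h2].
apply/andP; split; [apply/andP; split|]; lia.
Qed.

Lemma T1 n j e k : 1 <= j -> j.+1 < k -> k <= n ->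
  conj n (tw k) [:: (j.+1, e)] [:: (j, e)].
Proof.
move=> hj hjk hkn.
suff base : conj n (tw k) [:: (j.+1, true)] [:: (j, true)].
  case: e => //; apply: (conj_inv _ _ base); rewrite /wfw /= /wfl /= andbT; lia.
have -> : k = j.+2 + (k - j.+2) by lia.
have : j.+2 + (k - j.+2) <= n by lia.
elim: (k - j.+2) => [|d IH] hd.
  rewrite addn0 twS // twS //.
  have h0 := @T0 n j.+1 true j (ltnSn _) ltac:(lia).
  rewrite /conj in h0 *.
  rewrite -!catA /= (rbraid _ hj); last by lia.
  rewrite -[[:: (j.+1, true), (j, true) & _]]cat1s catA h0 /=. reflexivity.
rewrite addnS twS; last by lia.
rewrite /conj in IH *. rewrite catA IH; last by lia.
rewrite -!catA.
have hc := @comm_letter n (j.+2 + d) j true true ltac:(apply/andP; split; lia) ltac:(apply/andP; split; lia) ltac:(apply/orP; right; lia).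
rewrite /conj /= in hc. rewrite /= hc. reflexivity.
Qed.

Lemma La n p v : 1 <= p -> p.+1 <= n.-1 ->
  braid_eq n [:: (p, true), (p, true), (p.+1, true) & v]
             [:: (p.+1, true), (p, true), (p.+1, true), (p.+1, true), (p, false) & v].
Proof.
move=> h1 h2. symmetry.
rewrite -(rbraid _ h1 h2). rewrite -(rbraid _ h1 h2).
have := @rcancel n p true v ltac:(lia). move=> /= ->. reflexivity.
Qed.

Lemma Lb n p v : 1 <= p -> p.+1 <= n.-1 ->
  braid_eq n [:: (p.+1, true), (p, true), (p.+1, true), (p.+1, true), (p, true) & v]
             [:: (p, true), (p.+1, true), (p.+1, true), (p, true), (p.+1, true) & v].
Proof.
move=> h1 h2. transitivity [:: (p, true), (p.+1, true), (p, true), (p.+1, true), (p, true) & v].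
  symmetry; exact: rbraid.
exact: (beq_catr [:: (p, true); (p.+1, true)] (rbraid _ h1 h2)).
Qed.

Lemma conj_cons n a u v w : conj n [:: a] u v -> braid_eq n (u ++ a :: w) (a :: v ++ w).
Proof. rewrite /conj => h. have := beq_catl w h. by rewrite -!catA. Qed.

Lemma conj_w n y u v w : conj n y u v -> braid_eq n (u ++ y ++ w) (y ++ v ++ w).
Proof. rewrite /conj => h. have := beq_catl w h. by rewrite -!catA. Qed.

Lemma wfa n i : 1 <= i <= n.-1 -> wfw n (a_word i).
Proof.
move=> /andP[h1 h2]. rewrite a_wordE !wf_cat wf_winv wf_tw; last by lia.
by rewrite /wfw /= /wfl /= h1 h2.
Qed.

Lemma C2 n p : 1 <= p -> p.+1 <= n.-1 -> conj n [:: (p.+1, true)] (a_word p) (a_word p.+1).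
Proof.
move=> h1 h2.
have hT := @T0 n p.+1 true p (ltnSn _) h2.
have hTi := conj_inv (wf_tw (_ : p <= n)) (wf_tw (_ : p <= n)) hT.
rewrite /conj !a_wordE twS // winv_cat -!catA /=.
rewrite (conj_cons _ (hTi ltac:(lia) ltac:(lia))) (La _ h1 h2).
rewrite (conj_cons _ hT) /= cats0. reflexivity.
Qed.

Lemma C1 n p : 1 <= p -> p.+1 <= n.-1 ->
  conj n [:: (p.+1, true)] (a_word p.+1 ++ a_word p) (a_word p.+1 ++ a_word p).
Proof.
move=> h1 h2.
have hT := @T0 n p.+1 true p (ltnSn _) h2.
have hTi := conj_inv (wf_tw (_ : p <= n)) (wf_tw (_ : p <= n)) hT.
have E : braid_eq n (a_word p.+1 ++ a_word p) (tw p ++ [:: (p, true); (p.+1, true); (p.+1, true); (p, true)] ++ winv (tw p)).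
  rewrite !a_wordE twS // winv_cat -!catA /=.
  rewrite (wcancel' _ (wf_tw (_ : p <= n))); last by lia.
  rewrite (@rcancel n p false); last by lia. reflexivity.
apply: (conj_eq (beq_sym E) (beq_sym E)). rewrite /conj -!catA /=.
rewrite (conj_cons _ (hTi ltac:(lia) ltac:(lia))) -(conj_cons _ hT) /= (Lb _ h1 h2) cats0. reflexivity.
Qed.

Lemma conj_wc n y a b : conj n y [:: a] [:: b] -> forall w, braid_eq n (a :: y ++ w) (y ++ b :: w).
Proof. move=> h w. exact: (conj_w w h). Qed.

Lemma conj_ll n a b c : conj n [:: a] [:: b] [:: c] -> forall w, braid_eq n (b :: a :: w) (a :: c :: w).
Proof. move=> h w. exact: (conj_w w h). Qed.

Lemma a_word_idx i : 1 <= i -> all (fun l : letter => 1 <= l.1 <= i) (a_word i).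
Proof.
move=> hi. rewrite a_wordE !all_cat /winv all_rev all_map /tw all_map /= hi leqnn /=.
have H : all (fun k => 1 <= k <= i) (iota 1 i.-1).
  apply/allP => k; rewrite mem_iota => /andP[h1 h2]; apply/andP; split; lia.
rewrite H /=. apply/allP => l /mapP [k]. rewrite mem_iota => hk -> /=. lia.
Qed.

Lemma C3 n p i : 1 <= p -> p.+1 <= n.-1 -> 1 <= i <= n.-1 -> i != p -> i != p.+1 ->
  conj n [:: (p.+1, true)] (a_word i) (a_word i).
Proof.
move=> h1 h2 /andP[hi1 hi2] hip hip1.
case: (ltnP i p) => hlt.
  apply: comm_word; first by apply/andP; split; lia.
  apply: sub_all (a_word_idx hi1) => l /andP[l1 l2]; apply/andP; split; [apply/andP; split|]; lia.
have hgt : p.+1 < i by move: hip hip1; case: ltngtP hlt => //; lia.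
have hT1 := @T1 n p true i h1 hgt ltac:(lia).
have hTs := conj_swap (wf_tw (_ : i <= n)) hT1.
have hin : i <= n by lia.
have hTs' := conj_wc (hTs hin).
have hT1' := conj_wc hT1.
have hc := @comm_letter n i p true true ltac:(lia) ltac:(lia) ltac:(apply/orP; right; lia).
rewrite /conj a_wordE -!catA /=.
rewrite -(hTs' [::]) (conj_ll hc) (conj_ll hc) /=.
rewrite -hT1' cats0. reflexivity.
Qed.

Lemma expandA_cat s t : expandA (s ++ t) = expandA s ++ expandA t.
Proof. by rewrite /expandA map_cat flatten_cat. Qed.

Lemma expandA_cons x s : expandA (x :: s) = a_letter x ++ expandA s.
Proof. by []. Qed.

Lemma expandA_winv s : expandA (winv s) = winv (expandA s).
Proof.
elim: s => [|[i b] s IH] //=. rewrite winv_cons expandA_cat IH expandA_cons winv_cat /=.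
rewrite /expandA /= cats0. congr (_ ++ _). by case: b; rewrite /a_letter /= ?winvK.
Qed.

Lemma wf_expandA n s : wfw n s -> wfw n (expandA s).
Proof.
elim: s => [|[i b] s IH] //= /andP[hl hs]. rewrite expandA_cons wf_cat IH // andbT.
move: hl; rewrite /a_letter /wfl /=; case: b => /= hl; rewrite ?wf_winv wfa //.
Qed.

Definition cm (j : nat) (e : bool) (i : nat) : word * nat :=
  if e then (if i == j.-1 then ([::], j) else if i == j then ([:: (j, false)], j.-1) else ([::], i))
  else (if i == j then ([::], j.-1) else if i == j.-1 then ([:: (j.-1, true)], j) else ([::], i)).

Definition phv j e i : word := winv (cm j e i).1 ++ [:: ((cm j e i).2, true)] ++ (cm j e i).1.
Definition phi j e (l : letter) : word := if l.2 then phv j e l.1 else winv (phv j e l.1).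
Definition Phi j e (w : word) : word := flatten (map (phi j e) w).

Lemma Phi_cat j e s t : Phi j e (s ++ t) = Phi j e s ++ Phi j e t.
Proof. by rewrite /Phi map_cat flatten_cat. Qed.

Lemma Phi_winv j e s : Phi j e (winv s) = winv (Phi j e s).
Proof.
elim: s => [|[i b] s IH] //=. rewrite winv_cons Phi_cat IH /Phi /= cats0 winv_cat.
congr (_ ++ _). by case: b; rewrite /phi /= ?winvK.
Qed.

Lemma wf_phv n j e i : 2 <= j <= n.-1 -> 1 <= i <= n.-1 -> wfw n (phv j e i).
Proof.
move=> /andP[h1 h2] /andP[h3 h4].
rewrite /phv /cm; case: e; repeat case: ifP; move=> *;
  rewrite /= /wfw /winv /= /wfl /=; apply/andP; split => //; lia.
Qed.

Lemma ArtinPosJ n p : 1 <= p -> p.+1 <= n.-1 ->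
  conj n [:: (p.+1, true)] (a_word p.+1) (a_word p.+1 ++ a_word p ++ winv (a_word p.+1)).
Proof.
move=> h1 h2.
have hj : wfw n (a_word p.+1) by apply: wfa; lia.
have c1 := C1 h1 h2. have c2 := C2 h1 h2.
rewrite /conj /conj in c1 c2 *.
move: (a_word p.+1) (a_word p) hj c1 c2 => Aj Ap hj c1 c2.
symmetry.
transitivity (([:: (p.+1, true)] ++ (Aj ++ Ap)) ++ winv Aj).
  rewrite -!catA; reflexivity.
rewrite -c1.
transitivity (Aj ++ (Ap ++ [:: (p.+1, true)]) ++ winv Aj).
  rewrite -!catA; reflexivity.
rewrite c2 -!catA (wcancel0 hj). reflexivity.
Qed.

Lemma ArtinPos n j i : 2 <= j <= n.-1 -> 1 <= i <= n.-1 ->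
  conj n [:: (j, true)] (a_word i) (expandA (phv j true i)).
Proof.
move=> /andP[hj1 hj2] hi.
have [p ep] : exists p, j = p.+1 by exists j.-1; lia.
subst j. have h1 : 1 <= p by lia.
rewrite /phv /cm /=. case: eqP => [->|hp].
  rewrite /expandA /= cats0. exact: C2.
case: eqP => [->|hp1] /=.
  rewrite /expandA /= cats0. exact: ArtinPosJ.
rewrite /expandA /= cats0. apply: C3 => //; apply/eqP => //.
Qed.

Lemma ArtinNeg n j i : 2 <= j <= n.-1 -> 1 <= i <= n.-1 ->
  conj n [:: (j, false)] (a_word i) (expandA (phv j false i)).
Proof.
move=> /andP[hj1 hj2] hi.
have [p ep] : exists p, j = p.+1 by exists j.-1; lia.
subst j. have h1 : 1 <= p by lia.
have wx : wfw n [:: (p.+1, true)] by rewrite /wfw /= /wfl /=; lia.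
have hja : wfw n (a_word p.+1) by apply: wfa; lia.
have hpa : wfw n (a_word p) by apply: wfa; lia.
rewrite /phv /cm /=. case: eqP => [->|hp].
  rewrite /expandA /= cats0. exact: (conj_swap wx (C2 h1 hj2)).
case: eqP => [->|hp1] /=.
  rewrite /expandA /= cats0.
  apply: (conj_swap wx).
  have c2 := C2 h1 hj2. have c2i := conj_inv hpa hja c2.
  have cj := ArtinPosJ h1 hj2.
  have := conj_cat c2i (conj_cat cj c2).
  change (a_letter (p, false)) with (winv (a_word p)).
  change (a_letter (p, true)) with (a_word p).
  change (a_letter (p.+1, true)) with (a_word p.+1).
  move: (a_word p.+1) (a_word p) hja hpa c2 c2i cj => Aj Ap hja hpa c2 c2i cj.
  apply: conj_eq; first reflexivity.
  rewrite -!catA (wcancel' _ hja) (wcancel0' hja) cats0. reflexivity.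
rewrite /expandA /= cats0. apply: (conj_swap wx). apply: C3 => //; apply/eqP => //.
Qed.

Lemma ArtinWord n j e w : 2 <= j <= n.-1 -> wfw n w ->
  conj n [:: (j, e)] (expandA w) (expandA (Phi j e w)).
Proof.
move=> hj. elim: w => [|[i b] w IH] /=; first by move=> _; exact: conj_nil.
case/andP=> hl hw. rewrite expandA_cons /Phi /= expandA_cat -/(Phi j e w).
apply: conj_cat; last exact: IH.
have hi : 1 <= i <= n.-1 by [].
have hp : conj n [:: (j, e)] (a_word i) (expandA (phv j e i)).
  by case: (e) IH => _; [apply: ArtinPos | apply: ArtinNeg].
rewrite /a_letter /phi /=; case: b {hl} => //.
rewrite expandA_winv. apply: conj_inv => //; first exact: wfa.
exact/wf_expandA/wf_phv.
Qed.

Lemma beq_winv n u v : wfw n u -> wfw n v -> braid_eq n u v -> braid_eq n (winv u) (winv v).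
Proof.
move=> hu hv h.
transitivity (winv v ++ v ++ winv u); first by rewrite (wcancel' _ hv); reflexivity.
transitivity (winv v ++ u ++ winv u).
  exact: (beq_catr _ (beq_catl _ (beq_sym h))).
by rewrite (wcancel0 hu) cats0; reflexivity.
Qed.

Lemma Fin n k k' j e y X X' :
  k <= n -> k' <= n -> 1 <= j <= n.-1 -> wfw n y ->
  braid_eq n (tw k ++ [:: (j, e)]) (y ++ tw k') -> conj n y X X' ->
  braid_eq n ((j, ~~ e) :: winv (tw k) ++ X ++ tw k ++ [:: (j, e)])
             (winv (tw k') ++ X' ++ tw k').
Proof.
move=> hk hk' hj hy H hc.
have wx : wfw n (tw k ++ [:: (j, e)]) by rewrite wf_cat wf_tw // /wfw /= /wfl /= andbT.
have wy : wfw n (y ++ tw k') by rewrite wf_cat wf_tw // hy.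
have Hi := beq_winv wx wy H.
transitivity (winv (tw k ++ [:: (j, e)]) ++ X ++ (tw k ++ [:: (j, e)])).
  rewrite winv_cat winv1 /= -?catA. reflexivity.
transitivity (winv (y ++ tw k') ++ X ++ (y ++ tw k')).
  apply: cat_proper => //; apply: cat_proper => //; reflexivity.
rewrite winv_cat -!catA. rewrite (catA (winv y)) (catA (winv y ++ X)) -(catA (winv y)).
rewrite (conj_unconj hy hc). reflexivity.
Qed.

Definition ee k q := if q <= k then q.-1 else q.
Definition Xw (w : word) q : word := winv w ++ [:: (q.-1, true)] ++ w.

Lemma transpK a c k : transp a c (transp a c k) = k.
Proof. rewrite /transp; repeat case: ifP; move=> *; lia. Qed.

Lemma arith_a k q j : 1 <= j -> j.+1 < k -> 2 <= q ->
  ee k (transp j.+1 j.+2 q) = transp j j.+1 (ee k q).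
Proof. rewrite /ee /transp => *; repeat case: ifP; move=> *; lia. Qed.
Lemma arith_b k q : 2 <= k -> 2 <= q -> ee k.-1 q = transp k.-1 k (ee k q).
Proof. rewrite /ee /transp => *; repeat case: ifP; move=> *; lia. Qed.
Lemma arith_c k q : 1 <= k -> 2 <= q -> ee k.+1 q = transp k k.+1 (ee k q).
Proof. rewrite /ee /transp => *; repeat case: ifP; move=> *; lia. Qed.
Lemma arith_d k q j : 1 <= k -> k < j -> 2 <= q -> ee k (transp j j.+1 q) = transp j j.+1 (ee k q).
Proof. rewrite /ee /transp => *; repeat case: ifP; move=> *; lia. Qed.

Lemma cm_q j e i : 2 <= j -> 1 <= i -> (cm j e i).2.+1 = transp j j.+1 i.+1.
Proof. rewrite /cm /transp => *; case: e; repeat case: ifP; move=> /= *; lia. Qed.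

Lemma wf_Phi n j e w : 2 <= j <= n.-1 -> wfw n w -> wfw n (Phi j e w).
Proof.
move=> hj; elim: w => [|[i b] w IH] //= /andP[hl hw].
rewrite /Phi /= wf_cat -/(Phi j e w) IH // andbT /phi /=.
move: hl; rewrite /wfl /= => hl.
case: b; rewrite ?wf_winv; exact: wf_phv.
Qed.

Lemma wf_Xw n w q : 2 <= q <= n -> wfw n w -> wfw n (Xw w q).
Proof.
move=> hq hw. rewrite /Xw !wf_cat wf_winv hw /= andbT /wfw /= /wfl /=. lia.
Qed.

Lemma YA n w q (a : letter) : wfl n a ->
  conj n (expandA [:: a]) (expandA (Xw w q)) (expandA (Xw (w ++ [:: a]) q)).
Proof.
move=> ha.
have hy : wfw n (expandA [:: a]) by apply: wf_expandA; rewrite /wfw /= ha.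
rewrite /conj /Xw winv_cat !expandA_cat !expandA_winv.
move: (expandA [:: a]) hy (expandA w) (expandA [:: (q.-1, true)]) => A hy W Q.
rewrite -!catA (wcancel _ hy). reflexivity.
Qed.

Lemma YS n j e w q : 2 <= j <= n.-1 -> 2 <= q <= n -> wfw n w ->
  conj n [:: (j, e)] (expandA (Xw w q))
    (expandA (Xw ((cm j e q.-1).1 ++ Phi j e w) (transp j j.+1 q))).
Proof.
move=> hj hq hw.
have := ArtinWord e hj (wf_Xw hq hw).
have E : Phi j e (Xw w q) = Xw ((cm j e q.-1).1 ++ Phi j e w) (transp j j.+1 q).
  have hq' : (cm j e q.-1).2.+1 = transp j j.+1 q.
    rewrite cm_q; [congr transp; lia | lia | lia].
  rewrite /Xw !Phi_cat Phi_winv winv_cat -!catA. congr (_ ++ _).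
  by rewrite -hq' /=.
by rewrite E.
Qed.

Lemma wf_cm n j e i : 2 <= j <= n.-1 -> wfw n (cm j e i).1.
Proof. move=> hj; rewrite /cm; case: e; repeat case: ifP => //= *; rewrite /wfw /= /wfl /=; lia. Qed.

Lemma conj_nily n X : conj n [::] X X.
Proof. rewrite /conj cats0; reflexivity. Qed.

Lemma Step n k q w j e : 2 <= n -> 1 <= k <= n -> 2 <= q <= n -> wfw n w -> 1 <= j <= n.-1 ->
  exists k' q' w', [/\ (1 <= k' <= n) && (2 <= q' <= n), wfw n w', k' = transp j j.+1 k,
     ee k' q' = transp j j.+1 (ee k q) &
     braid_eq n ((j, ~~ e) :: winv (tw k) ++ expandA (Xw w q) ++ tw k ++ [:: (j, e)])
                (winv (tw k') ++ expandA (Xw w' q') ++ tw k')].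
Proof.
move=> hn hk hq hw hj.
have hjl : wfl n (j, e) by rewrite /wfl /=.
have [ha|hb] : (j.+1 < k) \/ (k <= j.+1) by lia.
  have hj' : 2 <= j.+1 <= n.-1 by lia.
  exists k, (transp j.+1 j.+2 q), ((cm j.+1 e q.-1).1 ++ Phi j.+1 e w); split.
  - apply/andP; split; first lia.
    rewrite /transp; repeat case: ifP; move=> *; lia.
  - by rewrite wf_cat wf_cm // wf_Phi.
  - rewrite /transp; repeat case: ifP; move=> *; lia.
  - apply: arith_a; lia.
  apply: (Fin (y := [:: (j.+1, e)])); try lia.
  - rewrite /wfw /= /wfl /=; lia.
  - symmetry; apply: T1; lia.
  exact: YS.
have [hb1|[hc|hd]] : k = j.+1 \/ k = j \/ k < j by lia.
- subst k. exists j, q.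
  have hT : tw j.+1 = tw j ++ [:: (j, true)] by apply: twS; lia.
  have hwj : wfw n (tw j) by apply: wf_tw; lia.
  case: e hjl => hjl.
    exists (w ++ [:: (j, true)]); split; [lia|..].
    + by rewrite wf_cat hw /wfw /= hjl.
    + by rewrite /transp eqxx; case: ifP => //; lia.
    + have := arith_b (k := j.+1) (q := q); apply; lia.
    apply: (Fin (y := expandA [:: (j, true)])); try lia.
    + apply: wf_expandA; by rewrite /wfw /= hjl.
    + change (expandA [:: (j, true)]) with (a_word j ++ [::]).
      rewrite hT cats0 a_wordE -!catA (wcancel0' hwj) cats0 /=. reflexivity.
    exact: YA.
  exists w; split; [lia|..].
  + by [].
  + by rewrite /transp eqxx; case: ifP => //; lia.
  + have := arith_b (k := j.+1) (q := q); apply; lia.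
  apply: (Fin (y := [::])); try lia.
  + by [].
  + rewrite hT -catA /= (@rcancel n j true [::]); last by lia.
    rewrite cats0; reflexivity.
  exact: conj_nily.
- subst k. exists j.+1, q.
  have hT : tw j.+1 = tw j ++ [:: (j, true)] by apply: twS; lia.
  have hwj : wfw n (tw j) by apply: wf_tw; lia.
  case: e hjl => hjl.
    exists w; split; [lia|..].
    + by [].
    + by rewrite /transp eqxx.
    + apply: arith_c; lia.
    apply: (Fin (y := [::])); try lia.
    + by [].
    + rewrite hT; reflexivity.
    exact: conj_nily.
  exists (w ++ [:: (j, false)]); split; [lia|..].
  + by rewrite wf_cat hw /wfw /= hjl.
  + by rewrite /transp eqxx.
  + apply: arith_c; lia.
  apply: (Fin (y := expandA [:: (j, false)])); try lia.
  + apply: wf_expandA; by rewrite /wfw /= hjl.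
  + change (expandA [:: (j, false)]) with (winv (a_word j) ++ [::]).
    rewrite hT cats0 a_wordE !winv_cat winvK -!catA /=.
    rewrite (wcancel' _ hwj) /= (@rcancel n j false [::]) //; reflexivity.
  exact: YA.
- exists k, (transp j j.+1 q), ((cm j e q.-1).1 ++ Phi j e w); split.
  - apply/andP; split; first lia.
    rewrite /transp; repeat case: ifP; move=> *; lia.
  - by rewrite wf_cat wf_cm ?wf_Phi //; lia.
  - rewrite /transp; repeat case: ifP; move=> *; lia.
  - apply: arith_d; lia.
  apply: (Fin (y := [:: (j, e)])); try lia.
  - by rewrite /wfw /= hjl.
  - apply: T0; lia.
  apply: YS => //; lia.
Qed.

Lemma perm_cat u v x : perm_of_word (u ++ v) x = perm_of_word u (perm_of_word v x).
Proof. by elim: u x => //= a u IH x; rewrite IH. Qed.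

Lemma perm_rcons g a x : perm_of_word (rcons g a) x = perm_of_word g (transp a.1 a.1.+1 x).
Proof. by rewrite -cats1 perm_cat. Qed.

Lemma perm_winv g x : perm_of_word (winv g) (perm_of_word g x) = x.
Proof.
elim: g x => //= a g IH x. rewrite winv_cons perm_cat /= transpK. exact: IH.
Qed.

Lemma perm_winv' g x : perm_of_word g (perm_of_word (winv g) x) = x.
Proof. have := perm_winv (winv g) x. by rewrite winvK. Qed.

Lemma perm_rel n u v : braid_rel n u v -> forall x, perm_of_word u x = perm_of_word v x.
Proof.
case=> [i s _ _| i _ _ | i j _ _ _ _ hij] x /=; rewrite /transp /=;
  repeat case: ifP; move=> *; lia.
Qed.

Lemma perm_beq n u v : braid_eq n u v -> forall x, perm_of_word u x = perm_of_word v x.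
Proof.
elim=> [w x| u0 v0 _ H x| u0 v0 w0 _ H1 _ H2 x| u0 v0 x0 y0 H x] //.
- by rewrite H1 H2.
by rewrite !perm_cat (perm_rel H).
Qed.

Lemma Inv n g : 2 <= n -> wfw n g ->
  exists k q w, [/\ (1 <= k <= n) && (2 <= q <= n), wfw n w, perm_of_word g k = 1,
     perm_of_word g (ee k q) = 2 &
     braid_eq n (winv g ++ [:: (1, true); (1, true)] ++ g) (winv (tw k) ++ expandA (Xw w q) ++ tw k)].
Proof.
move=> hn. elim/last_ind: g => [_|g x IH].
  exists 1, 2, [::]; split => //; first by apply/andP; split; lia.
  apply: beq_refl.
rewrite /wfw all_rcons => /andP[hx hg].
have [k [q [w [/andP[hk hq] hw p1 p2 H]]]] := IH hg.
case: x hx => j e hx.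
have [k' [q' [w' [/andP[hk' hq'] hw' ek ee' H']]]] := Step e hn hk hq hw hx.
exists k', q', w'; split => //.
- by apply/andP; split.
- by rewrite perm_rcons /= ek transpK.
- by rewrite perm_rcons /= ee' transpK.
rewrite -cats1 winv_cat winv1 /=.
rewrite -H'.
transitivity ((j, ~~ e) :: (winv g ++ [:: (1, true); (1, true)] ++ g) ++ [:: (j, e)]).
  rewrite -!catA; reflexivity.
rewrite H -!catA. reflexivity.
Qed.

Lemma half_twist_norm n b g : 2 <= n -> wfw n g ->
  braid_eq n b (winv g ++ [:: (1, true)] ++ g) ->
  (forall k, perm_of_word b k = transp 1 n k) ->
  exists g0, [/\ wfw n g0, braid_eq n b (winv g0 ++ [:: (1, true)] ++ g0),
     perm_of_word g0 1 = 1 & perm_of_word g0 n = 2].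
Proof.
move=> hn hg Hb hp.
have hpb x : perm_of_word b x = perm_of_word (winv g) (transp 1 2 (perm_of_word g x)).
  by rewrite (perm_beq Hb) !perm_cat.
set P := perm_of_word (winv g). set f := perm_of_word g.
have fP x : f (P x) = x by exact: perm_winv'.
have e1 : transp 1 n (P 1) = P 2 by rewrite -hp hpb perm_winv'.
have ne : P 1 <> P 2 by move=> h; have := fP 1; rewrite h fP.
have [h1|hN] : P 1 = 1 \/ P 1 = n.
  move: e1 ne; rewrite /transp; case: ifP => /eqP; first by left.
  case: ifP => /eqP; first by right.
  by move=> _ _ ->.
- exists g; split => //.
  + by rewrite -{1}h1 perm_winv'.
  + have : P 2 = n by rewrite -e1 h1 /transp eqxx.
    by move=> <-; rewrite perm_winv'.
- exists ((1, true) :: g); split.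
  + by rewrite /wfw /= /wfl /=; apply/andP; split => //; lia.
  + rewrite Hb winv_cons -!catA /= (@rcancel n 1 false); last by lia. reflexivity.
  + have : P 2 = 1 by rewrite -e1 hN /transp eqxx; case: ifP => // /eqP; lia.
    move=> h2 /=. rewrite -[X in perm_of_word g X]h2 perm_winv' /transp /=. done.
  + rewrite /= -[X in perm_of_word g X]hN perm_winv' /transp /=. done.
Qed.

Theorem lemma3p5 (n : nat) (b : word) :
  2 <= n -> well_formed n b -> is_half_twist n b ->
  (forall k, perm_of_word b k = transp 1 n k) ->
  in_A n (b ++ b) /\
  exists P : word, well_formed n P /\
    braid_eq n (b ++ b) (winv (expandA P) ++ a_word n.-1 ++ expandA P).
Proof.
move=> hn hb [g [hg Hb]] hp.
have [g0 [hg0 Hb0 f1 fn]] := half_twist_norm hn hg Hb hp.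
have [k [q [w [/andP[hk hq] hw pk pq H]]]] := Inv hn hg0.
have k1 : k = 1.
  have := perm_winv g0 k. rewrite pk -f1 perm_winv. by move=> <-.
subst k.
have eq : ee 1 q = q by rewrite /ee; case: ifP => //; lia.
rewrite eq in pq.
have qn : q = n.
  have := perm_winv g0 q. rewrite pq -fn perm_winv. by move=> <-.
subst q.
have HH : braid_eq n (b ++ b) (expandA (Xw w n)).
  rewrite Hb0. rewrite -!catA (wcancel _ hg0) /=. rewrite H /= cats0. reflexivity.
split.
  exists (Xw w n); split; last exact: HH.
  exact: (wf_Xw (_ : 2 <= n <= n) hw).
exists w; split => //.
rewrite HH /Xw !expandA_cat expandA_winv /expandA /= cats0. reflexivity.
Qed.
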